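(* Let $A, C, D$ be binary random variables, with $A$ taking values $a,\overline{a}$, $C$ taking values $c,\overline{c}$, $D$ taking values $d,\overline{d}$, and let $Y$ be a real random variable with finite expectation. Suppose the joint distribution factorizes as \[ p(A,C,D,Y)=p(D)\,p(C\mid D)\,p(A\mid C)\,p(Y\mid A,C). \] Assume that $C$ and $D$ are dependent, and that every event $\{A=x, C=y, D=z\}$ has positive probability. For $x\in\{a,\overline{a}\}$ let $E[Y_x]=E[Y|x,c]p(c)+E[Y|x,\overline{c}]p(\overline{c})$, and let $S_x$ denote either $S_x=E[Y|x,d]p(d)+E[Y|x,\overline{d}]p(\overline{d})$ or $S_x=E[Y|x]$ (the claim holds for each of these two choices). Then: (i) if $E[Y\mid a,D]$ and $E[A\mid D]$ are both nondecreasing or both nonincreasing in $D$, then $S_a\ge E[Y_a]$; if they are one nondecreasing and the other nonincreasing in $D$, then $S_a\le E[Y_a]$; (ii) if $E[Y\mid \overline{a},D]$ and $E[A\mid D]$ are both nondecreasing or both nonincreasing in $D$, then $S_{\overline{a}}\le E[Y_{\overline{a}}]$; if they are one nondecreasing and the other nonincreasing in $D$, then $S_{\overline{a}}\ge E[Y_{\overline{a}}]$.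
   Context: For $x\in\{a,\overline{a}\}$, $E[Y\mid x,D]$ is nondecreasing in $D$ if $E[Y\mid x,d]\ge E[Y\mid x,\overline{d}]$ and nonincreasing in $D$ if $E[Y\mid x,d]\le E[Y\mid x,\overline{d}]$. With $A$ coded as $a=1$, $\overline{a}=0$, $E[A\mid D]=p(a\mid D)$ is nondecreasing in $D$ if $p(a\mid d)\ge p(a\mid\overline{d})$ and nonincreasing if $p(a\mid d)\le p(a\mid\overline{d})$. $E[Y_x]$ is the causal effect on $Y$ of setting $A=x$ (expressed by the adjustment formula above). *)

(* Defs.v *)
From mathcomp Require Import all_boot all_order all_algebra.
From mathcomp Require Import all_classical all_reals all_analysis.
Set Implicit Arguments. Unset Strict Implicit. Unset Printing Implicit Defensive.
Import Order.TTheory GRing.Theory Num.Theory.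
Local Open Scope classical_set_scope.
Local Open Scope ring_scope.

(* Conventions: the binary variables A, C, D take values in bool, with
   a = true, abar = false; c = true, cbar = false; d = true, dbar = false. *)

Section Defs.
Context {d : measure_display} {T : measurableType d} {R : realType}
  (P : probability T R).

Definition ev (X : {RV P >-> bool}) (x : bool) : set T := X @^-1` [set x].

Definition pr (F : set T) : R := fine (P F).

Definition condE (Y : {RV P >-> R}) (F : set T) : R :=
  Rintegral P F (fun w => Y w) / pr F.

(* The joint law factorizes as p(D) p(C|D) p(A|C) p(Y|A,C), i.e. (by the chain
   rule p(D) p(C|D) p(A|C,D) p(Y|A,C,D), all conditioning events having positive
   probability) p(A|C,D) = p(A|C) and p(Y|A,C,D) = p(Y|A,C), the latter as
   conditional distributions of Y (for every Borel set B). *)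
Definition factorizes (A C D : {RV P >-> bool}) (Y : {RV P >-> R}) : Prop :=
  (forall x y z : bool,
     pr (ev A x `&` ev C y `&` ev D z) * pr (ev C y)
     = pr (ev A x `&` ev C y) * pr (ev C y `&` ev D z)) /\
  (forall (x y z : bool) (B : set R), measurable B ->
     pr (Y @^-1` B `&` (ev A x `&` ev C y `&` ev D z)) * pr (ev A x `&` ev C y)
     = pr (Y @^-1` B `&` (ev A x `&` ev C y)) * pr (ev A x `&` ev C y `&` ev D z)).

Definition dependent (C D : {RV P >-> bool}) : Prop :=
  ~ (forall y z : bool, pr (ev C y `&` ev D z) = pr (ev C y) * pr (ev D z)).

Definition EY_nondecr (Y : {RV P >-> R}) (A D : {RV P >-> bool}) (x : bool) :=
  condE Y (ev A x `&` ev D true) >= condE Y (ev A x `&` ev D false).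
Definition EY_nonincr (Y : {RV P >-> R}) (A D : {RV P >-> bool}) (x : bool) :=
  condE Y (ev A x `&` ev D true) <= condE Y (ev A x `&` ev D false).

(* E[A | D = z] = p(a | z) *)
Definition pA_given (A D : {RV P >-> bool}) (z : bool) : R :=
  pr (ev A true `&` ev D z) / pr (ev D z).
Definition EA_nondecr (A D : {RV P >-> bool}) := pA_given A D true >= pA_given A D false.
Definition EA_nonincr (A D : {RV P >-> bool}) := pA_given A D true <= pA_given A D false.

Definition EYdo (Y : {RV P >-> R}) (A C : {RV P >-> bool}) (x : bool) : R :=
  condE Y (ev A x `&` ev C true) * pr (ev C true)
  + condE Y (ev A x `&` ev C false) * pr (ev C false).

Definition S_adjD (Y : {RV P >-> R}) (A D : {RV P >-> bool}) (x : bool) : R :=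
  condE Y (ev A x `&` ev D true) * pr (ev D true)
  + condE Y (ev A x `&` ev D false) * pr (ev D false).

Definition S_crude (Y : {RV P >-> R}) (A : {RV P >-> bool}) (x : bool) : R :=
  condE Y (ev A x).

Definition cor4_claims (Y : {RV P >-> R}) (A C D : {RV P >-> bool}) (S : bool -> R) : Prop :=
  (((EY_nondecr Y A D true /\ EA_nondecr A D) \/ (EY_nonincr Y A D true /\ EA_nonincr A D))
     -> S true >= EYdo Y A C true) /\
  (((EY_nondecr Y A D true /\ EA_nonincr A D) \/ (EY_nonincr Y A D true /\ EA_nondecr A D))
     -> S true <= EYdo Y A C true) /\
  (((EY_nondecr Y A D false /\ EA_nondecr A D) \/ (EY_nonincr Y A D false /\ EA_nonincr A D))
     -> S false <= EYdo Y A C false) /\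
  (((EY_nondecr Y A D false /\ EA_nonincr A D) \/ (EY_nonincr Y A D false /\ EA_nondecr A D))
     -> S false >= EYdo Y A C false).

End Defs.

(* Main.v *)
Require Import Defs.
From mathcomp Require Import all_boot all_order all_algebra.
From mathcomp Require Import all_classical all_reals all_analysis.
From mathcomp Require Import measurable_realfun.
From mathcomp Require Import ring lra.
Import Order.TTheory GRing.Theory Num.Theory.
Local Open Scope classical_set_scope.
Local Open Scope ring_scope.
Lemma integral_mrestrT {d : measure_display} {T : measurableType d} {R : realType}
  {P : probability T R} (F : set T) (mF : measurable F) (f : T -> \bar R) :
  measurable_fun setT f ->
  (\int[mrestr P mF]_(x in setT) f x = \int[P]_(x in F) f x)%E.
Proof.
move=> mf.
rewrite -(setUv F) integral_setU //; last 3 first.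
- exact: measurableC.
- by rewrite setUv.
- by rewrite /disj_set setICr.
rewrite (eq_measure_integral P); last first.
  by move=> A mA AF; change (P (A `&` F) = P A); rewrite setIidl.
rewrite [X in (_ + X)%E](eq_measure_integral mzero); last first.
  move=> A mA AF; change (P (A `&` F) = 0%E).
  suff -> : A `&` F = set0 by rewrite measure0.
  by apply/seteqP; split => // x [/AF].
by rewrite integral_measure_zero adde0.
Qed.

Lemma prE {d : measure_display} {T : measurableType d} {R : realType}
  {P : probability T R} (S : set T) : measurable S -> P S = (pr P S)%:E.
Proof. by move=> mS; rewrite /pr fineK // fin_num_measure. Qed.

Lemma pr_ge0 {d : measure_display} {T : measurableType d} {R : realType}
  {P : probability T R} (S : set T) : measurable S -> 0 <= pr P S.
Proof. by move=> mS; rewrite /pr fine_ge0 // measure_ge0. Qed.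

Lemma keyY_ge0 {d : measure_display} {T : measurableType d} {R : realType}
  {P : probability T R} (Y : {RV P >-> R}) (F1 F2 : set T)
  (mF1 : measurable F1) (mF2 : measurable F2) (h : R -> \bar R) :
  measurable_fun setT h -> (forall y, 0 <= h y)%E ->
  (forall B, measurable B -> pr P (Y @^-1` B `&` F1) * pr P F2
                             = pr P (Y @^-1` B `&` F2) * pr P F1) ->
  ((pr P F2)%:E * \int[P]_(x in F1) h (Y x) = (pr P F1)%:E * \int[P]_(x in F2) h (Y x))%E.
Proof.
move=> mh h0 hB.
pose k1 : {nonneg R} := NngNum (@pr_ge0 _ _ _ P _ mF1).
pose k2 : {nonneg R} := NngNum (@pr_ge0 _ _ _ P _ mF2).
have mY : measurable_fun setT Y by exact: measurable_funPT.
have E (k : {nonneg R}) F (mF : measurable F) :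
  (\int[pushforward (mscale k (mrestr P mF)) Y]_(y in setT) h y =
   k%:num%:E * \int[P]_(x in F) h (Y x))%E.
  rewrite ge0_integral_pushforward //.
  have mhY : measurable_fun setT (h \o Y) by apply: measurableT_comp.
  rewrite preimage_setT ge0_integral_mscale //; last by move=> x _; exact: h0.
  by rewrite integral_mrestrT.
rewrite -(E k2 F1 mF1) -(E k1 F2 mF2).
apply: eq_measure_integral => B mB _.
change (k2%:num%:E * P (Y @^-1` B `&` F1) = k1%:num%:E * P (Y @^-1` B `&` F2))%E.
have mYB F : measurable F -> measurable (Y @^-1` B `&` F).
  by move=> mF; apply: measurableI => //; rewrite -[_ @^-1` _]setTI; exact: mY.
rewrite !prE //; last 2 first; try exact: mYB.
by rewrite -!EFinM /= mulrC hB // mulrC.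
Qed.

Lemma ereal_aux (R : realType) (p1 p2 : R) (a1 a2 b1 b2 : \bar R) :
  (p2%:E * a1 = p1%:E * a2)%E -> (p2%:E * b1 = p1%:E * b2)%E ->
  a1 \is a fin_num -> a2 \is a fin_num -> b1 \is a fin_num -> b2 \is a fin_num ->
  fine (a1 - b1)%E * p2 = fine (a2 - b2)%E * p1.
Proof.
case: a1 => // a1; case: a2 => // a2; case: b1 => // b1; case: b2 => // b2.
rewrite -!EFinM => -[ha] [hb] _ _ _ _ /=.
by rewrite !mulrBl mulrC ha mulrC [b1 * _]mulrC hb mulrC [b2 * _]mulrC.
Qed.

Lemma keyY {d : measure_display} {T : measurableType d} {R : realType}
  {P : probability T R} (Y : {RV P >-> R}) (F1 F2 : set T)
  (mF1 : measurable F1) (mF2 : measurable F2) :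
  P.-integrable setT (EFin \o Y) ->
  (forall B, measurable B -> pr P (Y @^-1` B `&` F1) * pr P F2
                             = pr P (Y @^-1` B `&` F2) * pr P F1) ->
  Rintegral P F1 Y * pr P F2 = Rintegral P F2 Y * pr P F1.
Proof.
move=> iY hB.
have iF F : measurable F -> P.-integrable F (EFin \o Y).
  by move=> mF; apply: integrableS iY.
have mE : measurable_fun setT (@EFin R) by apply/measurable_EFinP.
have hp0 : forall y : R, (0 <= (@EFin R)^\+ y)%E.
  by move=> y; apply: funepos_ge0.
have hn0 : forall y : R, (0 <= (@EFin R)^\- y)%E.
  by move=> y; apply: funeneg_ge0.
have hp := @keyY_ge0 _ _ _ P Y F1 F2 mF1 mF2 _ (measurable_funepos mE) hp0 hB.
have hn := @keyY_ge0 _ _ _ P Y F1 F2 mF1 mF2 _ (measurable_funeneg mE) hn0 hB.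
have e F : (\int[P]_(x in F) (Y x)%:E = \int[P]_(x in F) EFin^\+ (Y x) - \int[P]_(x in F) EFin^\- (Y x))%E.
  by rewrite integralE; congr (_ - _)%E; apply: eq_integral => x _; rewrite ?funeposE ?funenegE.
have fp F : measurable F -> (\int[P]_(x in F) EFin^\+ (Y x))%E \is a fin_num.
  move=> mF; have -> : (\int[P]_(x in F) EFin^\+ (Y x) = \int[P]_(x in F) (EFin \o Y)^\+ x)%E.
    by apply: eq_integral => x _; rewrite !funeposE.
  exact: (integrable_pos_fin_num mF (iF F mF)).
have fn F : measurable F -> (\int[P]_(x in F) EFin^\- (Y x))%E \is a fin_num.
  move=> mF; have -> : (\int[P]_(x in F) EFin^\- (Y x) = \int[P]_(x in F) (EFin \o Y)^\- x)%E.
    by apply: eq_integral => x _; rewrite !funenegE.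
  exact: (integrable_neg_fin_num mF (iF F mF)).
rewrite /Rintegral !e.
move: hp hn (fp _ mF1) (fp _ mF2) (fn _ mF1) (fn _ mF2).
apply: ereal_aux.
Qed.

Lemma mev {d : measure_display} {T : measurableType d} {R : realType}
  {P : probability T R} (X : {RV P >-> bool}) x : measurable (ev X x).
Proof. by rewrite /ev -[X @^-1` _]setTI; apply: measurable_funP. Qed.

Lemma ev_split {d : measure_display} {T : measurableType d} {R : realType}
  {P : probability T R} (X : {RV P >-> bool}) (F : set T) :
  F = (F `&` ev X true) `|` (F `&` ev X false).
Proof.
apply/seteqP; split => [w Fw|w [[]|[]]] //.
by case E: (X w); [left|right]; split => //; rewrite /ev /= E.
Qed.

Lemma ev_disj {d : measure_display} {T : measurableType d} {R : realType}
  {P : probability T R} (X : {RV P >-> bool}) (F : set T) :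
  [disjoint (F `&` ev X true) & (F `&` ev X false)].
Proof.
by rewrite /disj_set; apply/eqP/seteqP; split => // w [[_ /= h1] [_ /=]]; rewrite /ev /= in h1 *; rewrite h1.
Qed.

Lemma pr_split {d : measure_display} {T : measurableType d} {R : realType}
  {P : probability T R} (X : {RV P >-> bool}) (F : set T) : measurable F ->
  pr P F = pr P (F `&` ev X true) + pr P (F `&` ev X false).
Proof.
move=> mF.
have m1 : measurable (F `&` ev X true) by apply: measurableI => //; exact: mev.
have m0 : measurable (F `&` ev X false) by apply: measurableI => //; exact: mev.
apply: EFin_inj; rewrite EFinD -!prE //.
by rewrite {1}(ev_split X F) measureU //; apply/eqP; exact: ev_disj.
Qed.

Lemma pr_setT (d : measure_display) (T : measurableType d) (R : realType)
  (P : probability T R) : pr P setT = 1.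
Proof. by rewrite /pr probability_setT. Qed.

Lemma pr_gt0 {d : measure_display} {T : measurableType d} {R : realType}
  {P : probability T R} (S : set T) : measurable S -> (0 < P S)%E -> 0 < pr P S.
Proof. by move=> mS; rewrite prE // lte_fin. Qed.

Lemma Rint_split {d : measure_display} {T : measurableType d} {R : realType}
  {P : probability T R} (Y : {RV P >-> R}) (X : {RV P >-> bool}) (F : set T) :
  P.-integrable setT (EFin \o Y) -> measurable F ->
  Rintegral P F Y = Rintegral P (F `&` ev X true) Y + Rintegral P (F `&` ev X false) Y.
Proof.
move=> iY mF.
have m1 : measurable (F `&` ev X true) by apply: measurableI => //; exact: mev.
have m0 : measurable (F `&` ev X false) by apply: measurableI => //; exact: mev.
rewrite {1}(ev_split X F) Rintegral_setU //; last exact: ev_disj.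
by apply: integrableS iY => //; rewrite -ev_split.
Qed.

Lemma sign_co (R : realFieldType) (a b D c1 c2 K s t u : R) :
  0 < c1 -> 0 < c2 -> 0 < K -> D != 0 ->
  s = a * D * c1 -> t = b * D * c2 -> u = a * b * K ->
  ((0 <= s /\ 0 <= t) \/ (s <= 0 /\ t <= 0)) -> 0 <= u.
Proof.
move=> c1p c2p Kp D0 -> -> -> H.
have st : 0 <= (a * D * c1) * (b * D * c2).
  by case: H => -[h1 h2]; [exact: mulr_ge0|exact: mulr_le0].
have D2 : 0 < D * D by rewrite lt_def mulf_neq0 //= -expr2 sqr_ge0.
have DD : 0 < D * D * c1 * c2 by apply: mulr_gt0 => //; apply: mulr_gt0.
have ab : 0 <= a * b.
  have e : (a * D * c1) * (b * D * c2) = (a * b) * (D * D * c1 * c2) by ring.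
  by rewrite e pmulr_lge0 in st.
exact: mulr_ge0 (ltW Kp).
Qed.

Lemma sign_anti (R : realFieldType) (a b D c1 c2 K s t u : R) :
  0 < c1 -> 0 < c2 -> 0 < K -> D != 0 ->
  s = a * D * c1 -> t = b * D * c2 -> u = a * b * K ->
  ((0 <= s /\ t <= 0) \/ (s <= 0 /\ 0 <= t)) -> u <= 0.
Proof.
move=> c1p c2p Kp D0 hs ht hu H.
rewrite -oppr_ge0.
apply: (@sign_co R a (- b) D c1 c2 K s (- t) (- u)) => //.
- by rewrite ht; ring.
- by rewrite hu; ring.
- by case: H => -[h1 h2]; [left|right]; rewrite ?oppr_ge0 ?oppr_le0.
Qed.

Lemma alg_main (R : realFieldType) (u11 u10 u01 u00 r1 r0 rho1 rho0 m1 m0 e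
  E1 E0 pA1 pA0 Sadj Scr Edo : R) :
  0 < u11 -> 0 < u10 -> 0 < u01 -> 0 < u00 -> u11 + u10 + u01 + u00 = 1 ->
  0 < rho1 -> 0 < rho0 ->
  u11 * u00 - u10 * u01 != 0 -> e * e = 1 -> rho1 - rho0 = e * (r1 - r0) ->
  E1 = (m1 * rho1 * u11 + m0 * rho0 * u01) / (rho1 * u11 + rho0 * u01) ->
  E0 = (m1 * rho1 * u10 + m0 * rho0 * u00) / (rho1 * u10 + rho0 * u00) ->
  pA1 = (r1 * u11 + r0 * u01) / (u11 + u01) ->
  pA0 = (r1 * u10 + r0 * u00) / (u10 + u00) ->
  Sadj = E1 * (u11 + u01) + E0 * (u10 + u00) ->
  Scr = (m1 * rho1 * (u11 + u10) + m0 * rho0 * (u01 + u00))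
        / (rho1 * (u11 + u10) + rho0 * (u01 + u00)) ->
  Edo = m1 * (u11 + u10) + m0 * (u01 + u00) ->
  let co := ((E0 <= E1 /\ pA0 <= pA1) \/ (E1 <= E0 /\ pA1 <= pA0)) in
  let anti := ((E0 <= E1 /\ pA1 <= pA0) \/ (E1 <= E0 /\ pA0 <= pA1)) in
  (co -> 0 <= e * (Sadj - Edo)) /\ (anti -> e * (Sadj - Edo) <= 0) /\
  (co -> 0 <= e * (Scr - Edo)) /\ (anti -> e * (Scr - Edo) <= 0).
Proof.
move=> p11 p10 p01 p00 hsum pr1 pr0 hD ee hrho hE1 hE0 hA1 hA0 hSa hSc hEdo co anti.
set D := u11 * u00 - u10 * u01.
set W1 := rho1 * u11 + rho0 * u01.
set W0 := rho1 * u10 + rho0 * u00.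
set W := rho1 * (u11 + u10) + rho0 * (u01 + u00).
have W1p : 0 < W1 by rewrite /W1; apply: addr_gt0; apply: mulr_gt0.
have W0p : 0 < W0 by rewrite /W0; apply: addr_gt0; apply: mulr_gt0.
have Wp : 0 < W by rewrite /W; apply: addr_gt0; apply: mulr_gt0 => //; apply: addr_gt0.
have V1p : 0 < u11 + u01 by apply: addr_gt0.
have V0p : 0 < u10 + u00 by apply: addr_gt0.
have W1n : W1 != 0 by rewrite gt_eqF.
have W0n : W0 != 0 by rewrite gt_eqF.
have Wn : W != 0 by rewrite gt_eqF.
have V1n : u11 + u01 != 0 by rewrite gt_eqF.
have V0n : u10 + u00 != 0 by rewrite gt_eqF.
have c1p : 0 < rho1 * rho0 / (W1 * W0).
  by apply: divr_gt0; apply: mulr_gt0.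
have c2p : 0 < 1 / ((u11 + u01) * (u10 + u00)).
  by apply: divr_gt0 => //; apply: mulr_gt0.
have Kp : 0 < u11 * u01 / W1 + u10 * u00 / W0.
  by apply: addr_gt0; apply: divr_gt0 => //; apply: mulr_gt0.
have K'p : 0 < (u11 + u10) * (u01 + u00) / W.
  by apply: divr_gt0 => //; apply: mulr_gt0; apply: addr_gt0.
have hs : E1 - E0 = (m1 - m0) * D * (rho1 * rho0 / (W1 * W0)).
  rewrite hE1 hE0 /D /W1 /W0; field.
  by apply/andP; split.
have ht : pA1 - pA0 = (r1 - r0) * D * (1 / ((u11 + u01) * (u10 + u00))).
  rewrite hA1 hA0 /D; field.
  by apply/andP; split.
have hu : e * (Sadj - Edo) = (m1 - m0) * (r1 - r0) * (u11 * u01 / W1 + u10 * u00 / W0).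
  have h1 : Sadj - Edo = (m1 - m0) * (rho1 - rho0) * (u11 * u01 / W1 + u10 * u00 / W0).
    rewrite hSa hEdo hE1 hE0 /W1 /W0; field.
    by apply/andP; split.
  rewrite h1 hrho.
  transitivity ((m1 - m0) * (r1 - r0) * (u11 * u01 / W1 + u10 * u00 / W0) * (e * e)).
    by ring.
  by rewrite ee mulr1.
have hu' : e * (Scr - Edo) = (m1 - m0) * (r1 - r0) * ((u11 + u10) * (u01 + u00) / W).
  have h1 : Scr - Edo = (m1 - m0) * (rho1 - rho0) * ((u11 + u10) * (u01 + u00) / W).
    have e00 : u00 = 1 - u11 - u10 - u01 by rewrite -hsum; ring.
    rewrite hSc hEdo /W; rewrite e00; field.
    by rewrite -e00.
  rewrite h1 hrho.
  transitivity ((m1 - m0) * (r1 - r0) * ((u11 + u10) * (u01 + u00) / W) * (e * e)).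
    by ring.
  by rewrite ee mulr1.
have cov : co -> (0 <= E1 - E0 /\ 0 <= pA1 - pA0) \/ (E1 - E0 <= 0 /\ pA1 - pA0 <= 0).
  by rewrite /co !subr_ge0 !subr_le0.
have antiv : anti -> (0 <= E1 - E0 /\ pA1 - pA0 <= 0) \/ (E1 - E0 <= 0 /\ 0 <= pA1 - pA0).
  by rewrite /anti !subr_ge0 !subr_le0.
split; [|split; [|split]].
- by move/cov; apply: (@sign_co R _ _ _ _ _ _ _ _ _ c1p c2p Kp hD hs ht hu).
- by move/antiv; apply: (@sign_anti R _ _ _ _ _ _ _ _ _ c1p c2p Kp hD hs ht hu).
- by move/cov; apply: (@sign_co R _ _ _ _ _ _ _ _ _ c1p c2p K'p hD hs ht hu').
- by move/antiv; apply: (@sign_anti R _ _ _ _ _ _ _ _ _ c1p c2p K'p hD hs ht hu').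
Qed.

Lemma bridge (R : realFieldType) (q I : bool -> bool -> bool -> R)
  (pAC J u pAD IAD : bool -> bool -> R) (pC pD pA IA : bool -> R) :
  (forall x y z, 0 < q x y z) ->
  (forall y z, u y z = q true y z + q false y z) ->
  (forall x y, pAC x y = q x y true + q x y false) ->
  (forall y, pC y = u y true + u y false) ->
  (forall z, pD z = u true z + u false z) ->
  (forall x z, pAD x z = q x true z + q x false z) ->
  (forall x z, IAD x z = I x true z + I x false z) ->
  (forall x, pA x = pAC x true + pAC x false) ->
  (forall x, IA x = J x true + J x false) ->
  (forall x y z, I x y z * pAC x y = J x y * q x y z) ->
  (forall x y z, q x y z * pC y = pAC x y * u y z) ->
  pC true + pC false = 1 ->
  ~ (forall y z, u y z = pC y * pD z) ->
  forall x : bool,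
  let e : R := if x then 1 else -1 in
  let E1 := IAD x true / pAD x true in
  let E0 := IAD x false / pAD x false in
  let pA1 := pAD true true / pD true in
  let pA0 := pAD true false / pD false in
  let Sadj := E1 * pD true + E0 * pD false in
  let Scr := IA x / pA x in
  let Edo := J x true / pAC x true * pC true + J x false / pAC x false * pC false in
  let co := ((E0 <= E1 /\ pA0 <= pA1) \/ (E1 <= E0 /\ pA1 <= pA0)) in
  let anti := ((E0 <= E1 /\ pA1 <= pA0) \/ (E1 <= E0 /\ pA0 <= pA1)) in
  (co -> 0 <= e * (Sadj - Edo)) /\ (anti -> e * (Sadj - Edo) <= 0) /\
  (co -> 0 <= e * (Scr - Edo)) /\ (anti -> e * (Scr - Edo) <= 0).
Proof.
move=> qp Hu HpAC HpC HpD HpAD HIAD HpA HIA HI Hfac Htot Hdep x e E1 E0 pA1 pA0 Sadj Scr Edo co anti.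
have up y z : 0 < u y z by rewrite Hu; apply: addr_gt0.
have pCp y : 0 < pC y by rewrite HpC; apply: addr_gt0.
have pACp x' y : 0 < pAC x' y by rewrite HpAC; apply: addr_gt0.
have pCn y : pC y != 0 by rewrite gt_eqF.
have pACn x' y : pAC x' y != 0 by rewrite gt_eqF.
pose rho y := pAC x y / pC y.
pose r y := pAC true y / pC y.
pose m y := J x y / pAC x y.
have rhop y : 0 < rho y by apply: divr_gt0.
have hq y z : q x y z = rho y * u y z.
  by apply: (mulIf (pCn y)); rewrite Hfac /rho mulrAC divfK.
have hqt y z : q true y z = r y * u y z.
  by apply: (mulIf (pCn y)); rewrite Hfac /r mulrAC divfK.
have hI y z : I x y z = m y * q x y z.
  by apply: (mulIf (pACn x y)); rewrite HI /m mulrAC divfK.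
have hJ y : J x y = m y * pAC x y by rewrite /m divfK.
have hpAC y : pAC x y = rho y * pC y by rewrite /rho divfK.
have hsplit y : pAC true y + pAC false y = pC y.
  by rewrite !HpAC HpC !Hu; ring.
have hrho : rho true - rho false = e * (r true - r false).
  rewrite /rho /r /e; clear -hsplit pCn; destruct x; simpl.
    by rewrite mul1r.
  have h y : pAC false y = pC y - pAC true y by rewrite -hsplit; ring.
  rewrite !h; field; by apply/andP; split.
have hsum : u true true + u true false + u false true + u false false = 1.
  by rewrite -Htot !HpC; ring.
have hD : u true true * u false false - u true false * u false true != 0.
  apply/negP => /eqP hD0; apply: Hdep => y z.
  have e00 : u false false = 1 - u true true - u true false - u false true.
    by rewrite -hsum; ring.
  rewrite !HpC !HpD; case: y; case: z.
  - apply/eqP; rewrite -subr_eq0; apply/eqP.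
    by rewrite -hD0 e00; ring.
  - apply/eqP; rewrite -subr_eq0; apply/eqP.
    by rewrite -[RHS]oppr0 -hD0 e00; ring.
  - apply/eqP; rewrite -subr_eq0; apply/eqP.
    by rewrite -[RHS]oppr0 -hD0 e00; ring.
  - apply/eqP; rewrite -subr_eq0; apply/eqP.
    by rewrite -hD0 e00; ring.
have ee : e * e = 1 by rewrite /e; case: (x); rewrite ?mulr1 ?mulrNN ?mulr1.
apply: (@alg_main R (u true true) (u true false) (u false true) (u false false)
  (r true) (r false) (rho true) (rho false) (m true) (m false) e
  E1 E0 pA1 pA0 Sadj Scr Edo) => //.
- by rewrite /E1 HIAD HpAD !hI !hq !mulrA.
- by rewrite /E0 HIAD HpAD !hI !hq !mulrA.
- by rewrite /pA1 HpAD HpD !hqt.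
- by rewrite /pA0 HpAD HpD !hqt.
- by rewrite /Sadj !HpD.
- by rewrite /Scr HIA HpA !hJ !hpAC !HpC !mulrA.
- by rewrite /Edo -/(m true) -/(m false) !HpC.
Qed.

Lemma setI_CDA {T : Type} (a c dd : set T) : c `&` dd `&` a = a `&` c `&` dd.
Proof. by rewrite setIC setIA. Qed.

Theorem corollary4 (d : measure_display) (T : measurableType d) (R : realType)
  (P : probability T R) (A C D : {RV P >-> bool}) (Y : {RV P >-> R}) :
  P.-integrable setT (EFin \o Y) ->
  factorizes A C D Y ->
  dependent C D ->
  (forall x y z : bool, (0 < P (ev A x `&` ev C y `&` ev D z))%E) ->
  cor4_claims Y A C D (S_adjD Y A D) /\ cor4_claims Y A C D (S_crude Y A).
Proof.
move=> iY [fac1 fac2] dep pos.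
have mA x : measurable (ev A x) by exact: mev.
have mC x : measurable (ev C x) by exact: mev.
have mD x : measurable (ev D x) by exact: mev.
have mAC x y : measurable (ev A x `&` ev C y) by exact: measurableI.
have mAD x y : measurable (ev A x `&` ev D y) by exact: measurableI.
have mCD x y : measurable (ev C x `&` ev D y) by exact: measurableI.
have mc x y z : measurable (ev A x `&` ev C y `&` ev D z) by exact: measurableI.
have B := @bridge R (fun x y z => pr P (ev A x `&` ev C y `&` ev D z))
  (fun x y z => Rintegral P (ev A x `&` ev C y `&` ev D z) Y)
  (fun x y => pr P (ev A x `&` ev C y)) (fun x y => Rintegral P (ev A x `&` ev C y) Y)
  (fun y z => pr P (ev C y `&` ev D z)) (fun x z => pr P (ev A x `&` ev D z))
  (fun x z => Rintegral P (ev A x `&` ev D z) Y) (fun y => pr P (ev C y))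
  (fun z => pr P (ev D z)) (fun x => pr P (ev A x)) (fun x => Rintegral P (ev A x) Y).
have h1 : forall x y z, 0 < pr P (ev A x `&` ev C y `&` ev D z).
  by move=> x y z; apply: pr_gt0.
have h2 : forall y z, pr P (ev C y `&` ev D z) = pr P (ev A true `&` ev C y `&` ev D z)
    + pr P (ev A false `&` ev C y `&` ev D z).
  by move=> y z; rewrite (pr_split A _ (mCD y z)) (setI_CDA (ev A true)) (setI_CDA (ev A false)).
have h3 : forall x y, pr P (ev A x `&` ev C y) = pr P (ev A x `&` ev C y `&` ev D true)
    + pr P (ev A x `&` ev C y `&` ev D false).
  by move=> x y; rewrite (pr_split D _ (mAC x y)).
have h4 : forall y, pr P (ev C y) = pr P (ev C y `&` ev D true) + pr P (ev C y `&` ev D false).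
  by move=> y; rewrite (pr_split D _ (mC y)).
have h5 : forall z, pr P (ev D z) = pr P (ev C true `&` ev D z) + pr P (ev C false `&` ev D z).
  by move=> z; rewrite (pr_split C _ (mD z)) ![ev D z `&` _]setIC.
have h6 : forall x z, pr P (ev A x `&` ev D z) = pr P (ev A x `&` ev C true `&` ev D z)
    + pr P (ev A x `&` ev C false `&` ev D z).
  by move=> x z; rewrite (pr_split C _ (mAD x z)) [ev A x `&` ev D z `&` ev C true]setIAC [ev A x `&` ev D z `&` ev C false]setIAC.
have h7 : forall x z, Rintegral P (ev A x `&` ev D z) Y =
    Rintegral P (ev A x `&` ev C true `&` ev D z) Y + Rintegral P (ev A x `&` ev C false `&` ev D z) Y.
  by move=> x z; rewrite (Rint_split Y C _ iY (mAD x z)) [ev A x `&` ev D z `&` ev C true]setIAC [ev A x `&` ev D z `&` ev C false]setIAC.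
have h8 : forall x, pr P (ev A x) = pr P (ev A x `&` ev C true) + pr P (ev A x `&` ev C false).
  by move=> x; rewrite (pr_split C _ (mA x)).
have h9 : forall x, Rintegral P (ev A x) Y =
    Rintegral P (ev A x `&` ev C true) Y + Rintegral P (ev A x `&` ev C false) Y.
  by move=> x; rewrite (Rint_split Y C _ iY (mA x)).
have h10 : forall x y z, Rintegral P (ev A x `&` ev C y `&` ev D z) Y * pr P (ev A x `&` ev C y)
    = Rintegral P (ev A x `&` ev C y) Y * pr P (ev A x `&` ev C y `&` ev D z).
  move=> x y z; apply: keyY => //; exact: fac2.
have h12 : pr P (ev C true) + pr P (ev C false) = 1.
  by rewrite -(pr_setT _ _ _ P) (pr_split C _ measurableT) !setTI.
have H := B h1 h2 h3 h4 h5 h6 h7 h8 h9 h10 fac1 h12 dep.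
have [a1 [a2 [a3 a4]]] := H true.
have [b1 [b2 [b3 b4]]] := H false.
rewrite /= in a1 a2 a3 a4 b1 b2 b3 b4.
rewrite /cor4_claims /S_adjD /S_crude /EYdo /EY_nondecr /EY_nonincr /EA_nondecr /EA_nonincr /pA_given /condE.
split; (split; [|split; [|split]]).
all: move=> h.
- by move: (a1 h); rewrite mul1r subr_ge0.
- by move: (a2 h); rewrite mul1r subr_le0.
- by move: (b1 h); rewrite mulN1r oppr_ge0 subr_le0.
- by move: (b2 h); rewrite mulN1r oppr_le0 subr_ge0.
- by move: (a3 h); rewrite mul1r subr_ge0.
- by move: (a4 h); rewrite mul1r subr_le0.
- by move: (b3 h); rewrite mulN1r oppr_ge0 subr_le0.
- by move: (b4 h); rewrite mulN1r oppr_le0 subr_ge0.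
Qed.
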